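(* Let $X$ be a uniform space and let $f \colon X \to X$ be a uniformly continuous map. Let $Y$ be a subset of $X$ such that $Y$ and $f(Y)$ are both closed in $X$. Suppose that there is a net $(Z_i)_{i \in I}$ of subsets of $X$ such that $f(Z_i) \subset Z_i$ for all $i \in I$ and $(Z_i)$ converges to $Y$ in the Hausdorff-Bourbaki topology. Then $f(Y) \subset Y$.
   Context: For $V \subset X \times X$ and $A \subset X$, $V[A] = \{x \in X : (x,a) \in V \text{ for some } a \in A\}$. The Hausdorff-Bourbaki uniform structure on the set $\mathcal{P}(X)$ of all subsets of $X$ has as a base the sets $\widehat{V} = \{(A,B) : B \subset V[A] \text{ and } A \subset V[B]\}$, $V$ an entourage of $X$; the Hausdorff-Bourbaki topology is its associated topology. *)

(* Defs.v *)
From HB Require Import structures.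
From mathcomp Require Import all_boot all_order all_algebra.
From mathcomp Require Import all_classical all_reals all_analysis.
Set Implicit Arguments. Unset Strict Implicit. Unset Printing Implicit Defensive.
Local Open Scope classical_set_scope.

Definition entourage_image (X : Type) (V : set (X * X)) (A : set X) : set X :=
  [set x | exists2 a, A a & V (x, a)].

Definition hb_entourage (X : Type) (V : set (X * X)) (A B : set X) : Prop :=
  B `<=` entourage_image V A /\ A `<=` entourage_image V B.

Definition directed_set (I : Type) (le : I -> I -> Prop) : Prop :=
  (forall i, le i i) /\
  (forall i j k, le i j -> le j k -> le i k) /\
  (exists i : I, True) /\
  (forall i j, exists k, le i k /\ le j k).

(* The net (Z_i)_{i in I} converges to Y in the Hausdorff-Bourbaki topology:
   every basic neighbourhood {B | (Y,B) in V^} of Y (V an entourage of X)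
   eventually contains Z_i. *)
Definition hb_net_converges (X : uniformType) (I : Type) (le : I -> I -> Prop)
    (Z : I -> set X) (Y : set X) : Prop :=
  forall V : set (X * X), entourage V ->
    exists i0 : I, forall i, le i0 i -> hb_entourage V Y (Z i).

(* Main.v *)
Require Import Defs.
From HB Require Import structures.
From mathcomp Require Import all_boot all_order all_algebra.
From mathcomp Require Import all_classical all_reals all_analysis.
Local Open Scope classical_set_scope.

Theorem corollary3p6 (X : uniformType) (f : X -> X) (Y : set X)
    (I : Type) (le : I -> I -> Prop) (Z : I -> set X) :
  unif_continuous f ->
  closed Y -> closed (f @` Y) ->
  directed_set le ->
  (forall i, f @` Z i `<=` Z i) ->
  hb_net_converges le Z Y ->
  f @` Y `<=` Y.
Proof.
move=> uf cY _ [refl _] fZ conv _ [y Yy <-].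
rewrite (closure_id Y).1 //.
move=> B /nbhsP [W entW WB].
set U := split_ent W.
have entU : entourage U by exact: entourage_split_ent.
have entV : entourage [set xy : X * X | U (f xy.1, f xy.2)] by exact: uf.
have entV' : entourage ([set xy : X * X | U (f xy.1, f xy.2)] `&` U) by exact: filterI.
have [i0 Hi0] := conv _ entV'.
have [ZY YZ] := Hi0 i0 (refl i0).
have [a Za [Vya Uya]] := YZ y Yy.
have [b Yb [Vfab Ufab]] := ZY (f a) (fZ i0 _ (ex_intro2 _ _ a Za erefl)).
exists b; split => //.
apply: WB => /=.
rewrite /xsection /=. move: (entourage_split (f a) entW Vya Ufab).
by rewrite inE.
Qed.
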